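(* In Ruleset B, for any superposition of single Nim heaps with $k=\max_{1\le j\le\ell} i_j\ge1$, \[\langle \mathrm{Nim}(i_1),\ldots,\mathrm{Nim}(i_\ell)\rangle_B\equiv\begin{cases}0 & \text{if } k=2,\\ * & \text{if } k=1,\\ *(k-1) & \text{otherwise.}\end{cases}\]
   Context: Single-heap Nim: $\mathrm{Nim}(x)$ is a heap of $x$ tokens; classical move $(1,-j)$, $j\ge1$, removes $j$ tokens and is illegal if fewer than $j$ tokens remain. Quantum variation: a position is a nonempty finite set $\langle G_1,\ldots,G_n\rangle$ of classical positions; a classical move is legal if legal in some $G_i$; a Q-move is a nonempty set of legal classical moves, leading to the superposition of all legal results of applying one of its moves to one of the $G_i$. Ruleset B (subscript $B$): only Q-moves consisting of at least two distinct classical moves are allowed, except that when the player has exactly one legal classical move overall, he may play it as an unsuperposed move. The player with no allowed Q-move loses. $\equiv$ is game equivalence, $*k$ the value of a classical Nim heap of $k$ tokens, $*=*1$, $*0=0$. *)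

(* Defs.v *)
From mathcomp Require Import all_boot.
Set Implicit Arguments. Unset Strict Implicit. Unset Printing Implicit Defensive.

Inductive lose (P : Type) (mv : P -> P -> Prop) : P -> Prop :=
  | lose_intro x : (forall y, mv x y -> win mv y) -> lose mv x
with win (P : Type) (mv : P -> P -> Prop) : P -> Prop :=
  | win_intro x y : mv x y -> lose mv y -> win mv x.

Definition sum_move (A B : Type) (mA : A -> A -> Prop) (mB : B -> B -> Prop)
  (p q : A * B) : Prop :=
  (mA p.1 q.1 /\ q.2 = p.2) \/ (q.1 = p.1 /\ mB p.2 q.2).

Definition nim_move (m m' : nat) : Prop := m' < m.

Definition equiv_games (A B : Type) (mA : A -> A -> Prop) (mB : B -> B -> Prop)
  (a : A) (b : B) : Prop := lose (sum_move mA mB) (a, b).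

(* A quantum position <Nim(x_1),...,Nim(x_l)> is represented by the seq of heap
   sizes [:: x_1; ...; x_l], read as a (nonempty finite) set. *)
Definition qpos := seq nat.

(* classical move (1,-j) is legal in the superposition S *)
Definition legal (S : qpos) (j : nat) : Prop := 0 < j /\ exists2 x, x \in S & j <= x.

Definition unique_legal (S : qpos) : Prop :=
  exists j, legal S j /\ forall j', legal S j' -> j' = j.

Definition qmoveB (S T : qpos) : Prop :=
  exists Q : seq nat,
    [/\ Q != [::], (forall j, j \in Q -> legal S j),
        ((exists a b, [/\ a \in Q, b \in Q & a != b]) \/ unique_legal S) &
        (forall y, y \in T <-> exists x j, [/\ x \in S, j \in Q, j <= x & y = x - j])].

(* Main.v *)
Require Import Defs.
From mathcomp Require Import all_boot.
From mathcomp Require Import zify.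
Set Implicit Arguments.

Definition M (s : seq nat) := \max_(i <- s) i.

Lemma max_ub (s : seq nat) x : x \in s -> x <= M s.
Proof.
rewrite /M; elim: s => [|a s IH] //=; rewrite in_cons big_cons => /orP [/eqP ->|/IH]; lia.
Qed.

Lemma max_lub (s : seq nat) m : (forall x, x \in s -> x <= m) -> M s <= m.
Proof.
rewrite /M; elim: s => [|a s IH] H; first by rewrite big_nil.
rewrite big_cons geq_max H ?mem_head //=; apply: IH => x xs; apply: H; by rewrite in_cons xs orbT.
Qed.

Lemma max_in (s : seq nat) : 0 < M s -> M s \in s.
Proof.
rewrite /M; elim: s => [|a s IH]; first by rewrite big_nil.
rewrite big_cons in_cons; case: (leqP a (\max_(i <- s) i)) => h.
  by move=> p; rewrite IH ?orbT.
by rewrite eqxx.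
Qed.

Lemma max_eq (s : seq nat) m : (forall x, x \in s -> x <= m) -> m \in s -> M s = m.
Proof. move=> H Hm; apply/eqP; rewrite eqn_leq max_lub // max_ub //. Qed.

Arguments max_ub {s x}.
Arguments max_in {s}.
Arguments max_lub {s m}.
Arguments max_eq {s m}.

Definition g k := if k == 2 then 0 else if k == 1 then 1 else k.-1.

Lemma g_neq a b : a < b -> (2 <= b -> 1 <= a) -> g a <> g b.
Proof. rewrite /g; case: a => [|[|[|a]]]; case: b => [|[|[|b]]] //=; lia. Qed.

Lemma move_bound s t : qmoveB s t -> M t < M s /\ (2 <= M s -> 1 <= M t).
Proof.
case=> Q [Qn Ql Qd Tm].
have jle : forall j, j \in Q -> 0 < j <= M s.
  move=> j /Ql [j0 [x xs jx]]; have := max_ub xs; lia.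
have pos : 0 < M s.
  case: Q Qn jle {Ql Qd Tm} => [|j Q] // _ /(_ j (mem_head _ _)); lia.
split.
  have : M t <= (M s).-1; last lia.
  apply: max_lub => y /Tm [x [j [xs jQ jx ->]]].
  have := max_ub xs; have := jle j jQ; lia.
move=> k2.
case: Qd => [[a [b [aQ bQ ab]]]|[j [[j0 _] U]]].
  have ha := jle a aQ; have hb := jle b bQ.
  have [c [cQ hc]] : exists c, c \in Q /\ c < M s.
    case: (ltnP a (M s)) => h; first by exists a.
    exists b; split => //; move: ab; rewrite neq_ltn; lia.
  have : M s - c \in t.
    by apply/Tm; exists (M s), c; split => //; [apply: max_in | lia].
  move/max_ub; lia.
have h1 : legal s 1 by split => //; exists (M s); [apply: max_in|lia].
have h2 : legal s 2 by split => //; exists (M s); [apply: max_in|lia].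
have e1 := U _ h1; have e2 := U _ h2; lia.
Qed.

Lemma reach s m : 1 <= M s -> m < M s -> (2 <= M s -> 1 <= m) ->
  exists t, qmoveB s t /\ M t = m.
Proof.
move=> k1 mk hm; set k := M s.
have ks : k \in s by apply: max_in.
pose t := [seq x - (k - m) | x <- s & k - m <= x] ++ [seq x - k | x <- s & k <= x].
have Tm : forall y, y \in t <-> exists x j,
    [/\ x \in s, j \in [:: k - m; k], j <= x & y = x - j].
  move=> y; split.
    rewrite mem_cat => /orP [] /mapP [x]; rewrite mem_filter => /andP [h xs] ->.
      by exists x, (k - m); rewrite mem_head.
    by exists x, k; rewrite !inE eqxx orbT.
  case=> x [j [xs]]; rewrite !inE => /orP [] /eqP -> jx ->; rewrite mem_cat.
    by apply/orP; left; apply/mapP; exists x; rewrite // mem_filter jx.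
  by apply/orP; right; apply/mapP; exists x; rewrite // mem_filter jx.
exists t; split.
  exists [:: k - m; k]; split => //.
  - move=> j; rewrite !inE => /orP [] /eqP -> ; (split; [lia|]; exists k => //; lia).
  - case: (eqVneq k 1) => k1'.
      right; exists 1; split; first by split => //; exists k => //; rewrite k1'.
      move=> j [j0 [x xs jx]]; have := max_ub xs; rewrite -/k; lia.
    left; exists (k - m), k; split; rewrite ?inE ?eqxx ?orbT //.
    apply/eqP; lia.
apply: max_eq.
  move=> y /Tm [x [j [xs]]]; rewrite !inE => /orP [] /eqP -> jx ->;
  have := max_ub xs; rewrite -/k; lia.
by apply/Tm; exists k, (k - m); rewrite mem_head; split => //; lia.
Qed.

Arguments reach {s m}.

Lemma main N : forall s n, M s + n <= N ->
  (n = g (M s) -> lose (sum_move qmoveB nim_move) (s, n)) /\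
  (n <> g (M s) -> win (sum_move qmoveB nim_move) (s, n)).
Proof.
elim: N => [|N IH] s n hN.
  have h0 : M s = 0 by lia.
  have -> : n = 0 by lia.
  rewrite h0; split => // _; constructor => -[t n'] [[/= mv _]|[/= _ mv]].
    by have := move_bound mv; rewrite h0; lia.
  by move: mv; rewrite /nim_move.
split.
  move=> hn; constructor => -[t n'] [[/= mv ->]|[/= -> mv]].
    have [h1 h2] := move_bound mv.
    apply: (proj2 (IH t n _)); first lia.
    rewrite hn => /esym; exact: g_neq h1 h2.
  move: mv; rewrite /nim_move => mv.
  apply: (proj2 (IH s n' _)); lia.
move=> hn; case: (ltnP (g (M s)) n) => h.
  apply: (@win_intro _ _ _ (s, g (M s))); first by right; split.
  apply: (proj1 (IH s _ _)) => //; lia.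
have [m [hm1 hm2 hm3 hm4]] : exists m, [/\ m < M s, 2 <= M s -> 1 <= m, g m = n & 1 <= M s].
  move: h hn; case: (M s) => [|[|[|k]]]; rewrite /g /= => h hn; try lia.
    by exists 0; split => //=; lia.
  case: (eqVneq n 0) => [->|n0]; first by exists 2; split => //=; lia.
  case: (eqVneq n 1) => [->|n1]; first by exists 1; split => //=; lia.
  exists n.+1; split => //=; try lia.
  by case: n n0 n1 {h hn hN} => [|[|n]].
have [t [mv ht]] := reach hm4 hm1 hm2.
apply: (@win_intro _ _ _ (t, n)); first by left; split.
apply: (proj1 (IH t n _)); first lia.
by rewrite ht.
Qed.

Theorem lemma2 (s : seq nat) :
  s != [::] -> 1 <= \max_(i <- s) i ->
  equiv_games qmoveB nim_move s
    (let k := \max_(i <- s) i in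
     if k == 2 then 0 else if k == 1 then 1 else k.-1).
Proof.
move=> _ _; rewrite /equiv_games; exact: (proj1 (@main _ s _ (leqnn _)) erefl).
Qed.
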